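(* Let $m \ge 2$ be an integer, and let $k_m$ be a number with the following property: for every integer $k \ge k_m$ and every admissible $k$-tuple $\{g_jx + h_j\}_{j=1}^k$ of linear forms in $\mathbb{Z}[x]$ with $g_1,\ldots,g_k > 0$ and $\prod_{1 \le i < j \le k}(g_ih_j - g_jh_i) \ne 0$, the set $\{g_jn + h_j\}_{j=1}^k$ contains at least $m$ primes for infinitely many $n \in \mathbb{N}$. Let $k \ge k_m$ be an integer. Let $b_1,\ldots,b_k$ be distinct integers such that the $k$-tuple $\{x + b_j\}_{j=1}^k$ is admissible, and let $g$ be any positive integer coprime with $b_1 b_2\cdots b_k$. Then there is a subset $\{h_1,\ldots,h_m\} \subseteq \{b_1,\ldots,b_k\}$ (with $m$ elements) such that for infinitely many $n \in \mathbb{N}$, the numbers $gn + h_1,\ldots,gn + h_m$ are consecutive primes (i.e., they are all prime and, listed in increasing order, no other prime lies between any two of them).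
   Context: A $k$-tuple of linear forms $\{g_jx + h_j\}_{j=1}^k$ in $\mathbb{Z}[x]$ is called admissible if the polynomial $f(x) = \prod_{j=1}^k (g_jx + h_j)$ has no fixed prime divisor, i.e. for every prime $p$, $\#\{n \bmod p : f(n) \equiv 0 \bmod p\} < p$. (By the Maynard–Tao theorem, a number $k_m$ with the stated property exists for every $m \ge 2$; e.g. any $k_m$ with $k_m \log k_m > e^{8m+4}$ works.) *)

(* Defs.v *)
From mathcomp Require Import all_boot all_order all_algebra.
Set Implicit Arguments. Unset Strict Implicit. Unset Printing Implicit Defensive.
Import Order.TTheory GRing.Theory Num.Theory.
Local Open Scope ring_scope.

Definition primez (x : int) : bool := (0 < x) && prime `|x|%N.

Definition prod_forms (k : nat) (g h : 'I_k -> int) (x : int) : int :=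
  \prod_(j < k) (g j * x + h j).

Definition admissible (k : nat) (g h : 'I_k -> int) : Prop :=
  forall p : nat, prime p ->
    (#|[set r : 'I_p | (p%:Z %| prod_forms g h r%:Z)%Z]| < p)%N.

Definition nprimes_in (k : nat) (g h : 'I_k -> int) (n : nat) : nat :=
  count primez (undup [seq g j * n%:Z + h j | j <- enum 'I_k]).

Definition km_property (m km : nat) : Prop :=
  forall k : nat, (km <= k)%N ->
  forall g h : 'I_k -> int,
    (forall j, 0 < g j) ->
    \prod_(i < k) \prod_(j < k | (i < j)%N) (g i * h j - g j * h i) != 0 ->
    admissible g h ->
    forall N : nat, exists2 n : nat, (N <= n)%N & (m <= nprimes_in g h n)%N.

(* Main.v *)
Require Import Defs.
From mathcomp Require Import all_boot all_order all_algebra zify ring.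
From Stdlib Require Import Classical.
Import Order.TTheory GRing.Theory Num.Theory.
Local Open Scope ring_scope.

Lemma dvdzD' (d x y : int) : (d %| x)%Z -> (d %| y)%Z -> (d %| x + y)%Z.
Proof. move=> hx hy; exact: rpredD. Qed.
Lemma dvdzB' (d x y : int) : (d %| x)%Z -> (d %| y)%Z -> (d %| x - y)%Z.
Proof. move=> hx hy; exact: rpredB. Qed.

Lemma prod_congr (I : finType) (p : int) (F G : I -> int) :
  (forall i, (p %| F i - G i)%Z) -> (p %| \prod_i F i - \prod_i G i)%Z.
Proof.
move=> H.
apply: (big_ind2 (fun x y => (p %| x - y)%Z)).
- by rewrite subrr dvdz0.
- move=> x1 x2 y1 y2 h1 h2.
  have -> : x1 * y1 - x2 * y2 = (x1 - x2) * y1 + x2 * (y1 - y2) by ring.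
  apply: dvdzD'; [exact: dvdz_mulr | exact: dvdz_mull].
- by move=> i _; apply: H.
Qed.

Lemma abs_prod (I : finType) (P : pred I) (F : I -> int) :
  `|(\prod_(i | P i) F i)%R|%N = (\prod_(i | P i) `|F i|)%N.
Proof. by apply: (big_morph absz) => // x y; rewrite abszM. Qed.

Lemma prime_dvdz_prod (I : finType) (P : pred I) (F : I -> int) (p : nat) :
  prime p -> (p%:Z %| \prod_(i | P i) F i)%Z -> exists2 i, P i & (p%:Z %| F i)%Z.
Proof.
move=> pp; rewrite dvdzE abs_prod /= Euclid_dvd_prod //.
elim/big_rec: _ => [//|i x Pi IH].
case/orP=> [h|/IH//]; by exists i.
Qed.

Lemma prime_dvdzM (p : nat) (x y : int) : prime p ->
  (p%:Z %| x * y)%Z -> (p%:Z %| x)%Z \/ (p%:Z %| y)%Z.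
Proof. move=> pp; rewrite !dvdzE abszM Euclid_dvdM //; case/orP; auto. Qed.

Lemma ivt_nat (f : nat -> nat) (m K : nat) :
  (f 0 <= m)%N -> (m <= f K)%N -> (forall i, f i.+1 <= (f i).+1)%N ->
  exists i, f i = m.
Proof.
move=> h0 hK hs; elim: K hK => [|K IH] hK.
  by exists 0%N; apply/eqP; rewrite eqn_leq h0 hK.
case: (leqP m (f K)) => h; first exact: IH.
exists K.+1; apply/eqP; rewrite eqn_leq hK andbT.
by apply: leq_trans (hs K) _.
Qed.

Lemma pigeon (T : eqType) (L : seq T) (Good : T -> nat -> Prop) :
  (forall N : nat, exists2 n : nat, (N <= n)%N & exists2 S, S \in L & Good S n) ->
  exists2 S, S \in L & forall N : nat, exists2 n : nat, (N <= n)%N & Good S n.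
Proof.
elim: L => [|S0 L IH] H.
  by have [n _ [S]] := H 0%N; rewrite in_nil.
case: (classic (forall N : nat, exists2 n : nat, (N <= n)%N & Good S0 n)) => h.
  by exists S0 => //; rewrite mem_head.
have [N0 hN0] : exists N0 : nat, forall n : nat, (N0 <= n)%N -> ~ Good S0 n.
  apply: NNPP => hc; apply: h => N.
  apply: NNPP => hc2; apply: hc; exists N => n hn hg; apply: hc2; by exists n.
have [|S hS hG] := IH.
  move=> N; have [n hn [S hS hg]] := H (maxn N N0).
  exists n; first by apply: leq_trans hn; rewrite leq_maxl.
  exists S => //; move: hS; rewrite in_cons => /orP [/eqP eS|//].
  by exfalso; apply: (hN0 n); [apply: leq_trans hn; rewrite leq_maxr|rewrite -eS].
by exists S => //; rewrite in_cons hS orbT.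
Qed.

Definition Lb {k} (b : 'I_k -> int) : nat := (\sum_j `|b j|)%N.
Definition Mb {k} (b : 'I_k -> int) : nat := ((2 * Lb b).+3)`!.
Definition cc {k} (b : 'I_k -> int) (i : nat) : int := i%:Z - (Lb b)%:Z.
Definition Qb {k} (b : 'I_k -> int) : nat :=
  (\prod_(i < (2 * Lb b).+1 | cc b i != 0) `|cc b i|)%N.
Definition n0b {k} (b : 'I_k -> int) : nat := (Qb b * Mb b * (Mb b).+1)%N.
Definition sb {k} (b : 'I_k -> int) (g : nat) : int := (g * n0b b)%N%:Z.
Definition gapb {k} (b : 'I_k -> int) (c : int) : bool := [forall j, b j != c].
Definition db {k} (b : 'I_k -> int) (g : nat) (c : int) : int :=
  if c == 0 then (Mb b).+1%:Z else 1 + (sb b g %/ c)%Z.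
Definition Pb {k} (b : 'I_k -> int) (g : nat) : nat :=
  (\prod_(i < (2 * Lb b).+1 | gapb b (cc b i)) `|db b g (cc b i)|)%N.

Lemma bL {k} (b : 'I_k -> int) j : (`|b j| <= Lb b)%N.
Proof. by rewrite /Lb (bigD1 j) //= leq_addr. Qed.

Lemma idx {k} (b : 'I_k -> int) (c : int) :
  - (Lb b)%:Z <= c <= (Lb b)%:Z -> exists i : 'I_(2 * Lb b).+1, cc b i = c.
Proof.
move=> /andP [h1 h2].
have hi : (`|(c + (Lb b)%:Z)%R| < (2 * Lb b).+1)%N by lia.
exists (Ordinal hi); rewrite /cc /=; lia.
Qed.

Lemma M_ge3 {k} (b : 'I_k -> int) : (3 <= Mb b)%N.
Proof. apply: leq_trans (fact_geq _); lia. Qed.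

Lemma M_dvd {k} (b : 'I_k -> int) (e : nat) : (0 < e)%N -> (e <= 2 * Lb b)%N -> (e %| Mb b)%N.
Proof. move=> h1 h2; apply: dvdn_fact; lia. Qed.

Lemma F2 {k} (b : 'I_k -> int) g (c : int) : c != 0 -> (`|c| <= Lb b)%N ->
  (c * (Mb b)%:Z %| sb b g)%Z.
Proof.
move=> c0 cL.
have [i hi] : exists i : 'I_(2 * Lb b).+1, cc b i = c by apply: idx; lia.
have hQ : (`|c| %| Qb b)%N.
  by rewrite /Qb (bigD1 i) /= ?hi // dvdn_mulr.
rewrite dvdzE abszM /sb /n0b /=.
apply: dvdn_mull; apply: dvdn_mulr; exact: dvdn_mul hQ (dvdnn _).
Qed.

Lemma s_pos {k} (b : 'I_k -> int) g : (0 < g)%N -> 0 < sb b g.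
Proof.
move=> hg; rewrite /sb ltz_nat /n0b !muln_gt0 hg fact_gt0 /= /= andbT.
by rewrite andbT; apply: prodn_cond_gt0 => i /= /negPf h; rewrite absz_gt0 h.
Qed.

Lemma F3 {k} (b : 'I_k -> int) g (c : int) : (0 < g)%N -> (`|c| <= Lb b)%N ->
  [/\ (db b g c %| sb b g + c)%Z, ((Mb b)%:Z %| db b g c - 1)%Z & (2 <= `|db b g c|)%N].
Proof.
move=> hg cL; have M3 := M_ge3 b; rewrite /db.
case: eqP => [->|/eqP c0].
  split.
  - by rewrite addr0 /sb /n0b dvdzE /=; apply: dvdn_mull; apply: dvdn_mull.
  - by apply/dvdzP; exists 1; rewrite -natz; lia.
  - by rewrite /=; lia.
have /dvdzP [u hu] := F2 b g c c0 cL.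
have -> : (sb b g %/ c)%Z = u * (Mb b)%:Z.
  by rewrite hu mulrA mulrAC mulzK.
have sp := s_pos b g hg.
have u0 : u != 0 by apply/eqP => u0; move: sp; rewrite hu u0 mul0r ltxx.
split.
- by apply/dvdzP; exists c; rewrite hu; ring.
- by rewrite addrC addKr dvdz_mull.
- have : (1 <= `|u|)%N by rewrite absz_gt0.
  nia.
Qed.

Lemma F4 {k} (b : 'I_k -> int) g (c : int) (p : nat) j : (0 < g)%N -> gapb b c ->
  (`|c| <= Lb b)%N -> prime p -> (p%:Z %| db b g c)%Z -> ~ (p%:Z %| sb b g + b j)%Z.
Proof.
move=> hg gc cL pp hpd hpj.
have [h1 h2 h3] := F3 b g c hg cL.
have hpc : (p%:Z %| sb b g + c)%Z := dvdz_trans hpd h1.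
have hbc : (p%:Z %| b j - c)%Z.
  have -> : b j - c = (sb b g + b j) - (sb b g + c) by ring.
  exact: rpredB.
have bc0 : b j - c != 0.
  by rewrite subr_eq0; move: gc => /forallP /(_ j).
have hbj := bL b j.
have pL : (p <= 2 * Lb b)%N.
  move: hbc; rewrite dvdzE /= => /dvdn_leq; rewrite absz_gt0 => /(_ bc0) h.
  apply: leq_trans h _; clear -hbj cL; lia.
have pM : (p %| Mb b)%N by apply: M_dvd => //; exact: prime_gt0.
have : (p%:Z %| db b g c - (db b g c - 1))%Z.
  apply: rpredB => //; apply: dvdz_trans h2; by rewrite dvdzE.
rewrite opprB addrC subrK dvdzE /= dvdn1 => /eqP p1.
by move: pp; rewrite p1.
Qed.

Lemma F5 {k} (b : 'I_k -> int) g : (0 < g)%N -> (0 < Pb b g)%N /\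
  forall c, gapb b c -> (`|c| <= Lb b)%N -> (`|db b g c| %| Pb b g)%N.
Proof.
move=> hg; split.
  apply: prodn_cond_gt0 => i _.
  have ci : (`|cc b i| <= Lb b)%N by rewrite /cc; have := ltn_ord i; clear; lia.
  have [_ _ h] := F3 b g (cc b i) hg ci.
  by apply: leq_trans h.
move=> c gc cL.
have [i hi] : exists i : 'I_(2 * Lb b).+1, cc b i = c by apply: idx; lia.
by rewrite /Pb (bigD1 i) /= ?hi // dvdn_mulr.
Qed.

Lemma F6 {k} (b : 'I_k -> int) g (p : nat) j : (0 < g)%N -> prime p ->
  (p %| Pb b g)%N -> ~ (p%:Z %| sb b g + b j)%Z.
Proof.
move=> hg pp; rewrite /Pb Euclid_dvd_prod //.
elim/big_rec: _ => [//|i x gi IH].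
case/orP=> [h|/IH//].
apply: (F4 b g (cc b i) p j hg gi _ pp h).
  by rewrite /cc; have := ltn_ord i; clear; lia.
Qed.

Lemma fproof (p : nat) (x : int) : (0 < p)%N -> (`|(x %% p%:Z)%Z| < p)%N.
Proof.
move=> p0.
have h1 : 0 <= (x %% p%:Z)%Z by apply: modz_ge0; rewrite eqz_nat -lt0n.
have h2 : (x %% p%:Z)%Z < p%:Z by apply: ltz_pmod; rewrite ltz_nat.
move: h1 h2; set y := (x %% p%:Z)%Z; clear; lia.
Qed.

Lemma fcongr (p : nat) (x : int) : (0 < p)%N -> (p%:Z %| `|(x %% p%:Z)%Z|%:Z - x)%Z.
Proof.
case: p => [//|p] _.
rewrite gez0_abs; last by apply: modz_ge0.
rewrite {2}(divz_eq x p.+1%:Z).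
have -> : forall a c : int, c - (a + c) = - a by move=> *; ring.
rewrite rpredN.
exact: dvdz_mull (dvdzz _).
Qed.

Lemma adm_new {k} (b : 'I_k -> int) (g : nat) : (0 < g)%N ->
  admissible (fun _ => 1) b -> gcdz g%:Z (\prod_(j < k) b j) = 1%N ->
  admissible (fun _ => (g * Pb b g)%N%:Z) (fun j => sb b g + b j).
Proof.
move=> hg hadm hcop p pp.
have p0 := prime_gt0 pp.
set A := (g * Pb b g)%N.
case: (boolP (p %| A)%N) => hpA.
  suff -> : [set r : 'I_p | (p%:Z %| prod_forms (fun _ => A%:Z) (fun j => sb b g + b j) r%:Z)%Z] = set0.
    by rewrite cards0.
  apply/setP => r; rewrite inE in_set0; apply/negP.
  rewrite /prod_forms => /(@prime_dvdz_prod _ _ _ _ pp) [j _ hj].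
  have hH : (p%:Z %| sb b g + b j)%Z.
    have -> : sb b g + b j = (A%:Z * r%:Z + (sb b g + b j)) - A%:Z * r%:Z by ring.
    by apply: rpredB => //; apply: dvdz_mulr; rewrite dvdzE.
  move: hpA; rewrite Euclid_dvdM // => /orP [hpg|hpP]; last first.
    exact: (F6 b g p j hg pp hpP hH).
  have hbj : (p%:Z %| b j)%Z.
    have -> : b j = (sb b g + b j) - (g%:Z * (n0b b)%:Z) by rewrite /sb PoszM; ring.
    by apply: rpredB => //; apply: dvdz_mulr; rewrite dvdzE.
  have : (p%:Z %| gcdz g%:Z (\prod_(j < k) b j))%Z.
    rewrite dvdz_gcd; apply/andP; split; first by rewrite dvdzE.
    by rewrite (bigD1 j) //=; apply: dvdz_mulr.
  by rewrite hcop dvdzE /= dvdn1 => /eqP p1; move: pp; rewrite p1.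
pose f (r : 'I_p) : 'I_p := Ordinal (fproof p (A%:Z * r%:Z + sb b g)%R p0).
have fc (r : 'I_p) : (p%:Z %| (f r)%:Z - (A%:Z * r%:Z + sb b g))%Z.
  exact: fcongr.
have finj : injective f.
  move=> r1 r2 e.
  have e' : (f r1)%:Z = (f r2)%:Z by rewrite e.
  have h : (p%:Z %| A%:Z * (r1%:Z - r2%:Z))%Z.
    have -> : A%:Z * (r1%:Z - r2%:Z) = ((f r2)%:Z - (A%:Z * r2%:Z + sb b g))
        - ((f r1)%:Z - (A%:Z * r1%:Z + sb b g)) by rewrite e'; ring.
    exact: rpredB.
  case/(@prime_dvdzM _ _ _ pp): h => [hA|hr]; first by move: hA; rewrite dvdzE /= (negPf hpA).
  apply: val_inj => /=.
  move: hr; rewrite -eqz_mod_dvd !modz_small; first by rewrite eqz_nat => /eqP.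
  - by rewrite ltz_nat ltn_ord.
  - by rewrite ltz_nat ltn_ord.
have sub : f @: [set r : 'I_p | (p%:Z %| prod_forms (fun _ => A%:Z) (fun j => sb b g + b j) r%:Z)%Z]
    \subset [set r : 'I_p | (p%:Z %| prod_forms (fun _ => 1) b r%:Z)%Z].
  apply/subsetP => _ /imsetP [r hr ->]; rewrite inE in hr; rewrite inE.
  rewrite /prod_forms in hr *.
  have hc := @prod_congr _ p (fun j => 1 * (f r)%:Z + b j) (fun j => A%:Z * r%:Z + (sb b g + b j)) _.
  have -> : \prod_(j < k) (1 * (f r)%:Z + b j) = (\prod_(j < k) (1 * (f r)%:Z + b j)
     - \prod_(j < k) (A%:Z * r%:Z + (sb b g + b j))) + \prod_(j < k) (A%:Z * r%:Z + (sb b g + b j)) by ring.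
  apply: rpredD => //; apply: hc => j.
  have -> : 1 * (f r)%:Z + b j - (A%:Z * r%:Z + (sb b g + b j)) = (f r)%:Z - (A%:Z * r%:Z + sb b g) by ring.
  exact: fc.
rewrite -(card_imset _ finj); exact: leq_ltn_trans (subset_leq_card sub) (hadm p pp).
Qed.

Lemma cnt k (P : pred 'I_k) : count P (enum 'I_k) = #|[set j | P j]|.
Proof. by rewrite cardsE cardE /enum_mem size_filter (@eq_filter _ _ predT) // filter_predT. Qed.

Lemma det_new {k} (b : 'I_k -> int) (A : nat) (s : int) : injective b -> (0 < A)%N ->
  \prod_(i < k) \prod_(j < k | (i < j)%N)
     ((fun _ => A%:Z) i * (fun j => s + b j) j - (fun _ => A%:Z) j * (fun j => s + b j) i) != 0.
Proof.
move=> hb hA.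
apply/prodf_neq0 => i _; apply/prodf_neq0 => j hij /=.
have -> : A%:Z * (s + b j) - A%:Z * (s + b i) = A%:Z * (b j - b i) by ring.
apply: mulf_neq0; first by rewrite eqz_nat -lt0n.
rewrite subr_eq0; apply/eqP => /hb e; by move: hij; rewrite e ltnn.
Qed.

Lemma step_card {k} (b : 'I_k -> int) (hb : injective b) (T : {set 'I_k}) (t : int) :
  (#|[set j in T | (b j < t + 1)%R]| <= #|[set j in T | (b j < t)%R]|.+1)%N.
Proof.
case: (boolP [exists j, b j == t]) => [/existsP [j0 /eqP e0]|hn].
  apply: leq_trans (_ : #|j0 |: [set j in T | (b j < t)%R]| <= _)%N.
    apply: subset_leq_card; apply/subsetP => j; rewrite !inE => /andP [jT hj].
    case: (eqVneq j j0) => //= ne; rewrite jT /=.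
    have : b j != t by rewrite -e0; apply/eqP => /hb; apply/eqP.
    clear -hj; lia.
  by rewrite cardsU1; case: (_ \notin _).
apply: leqW; apply: subset_leq_card; apply/subsetP => j; rewrite !inE => /andP [jT hj].
rewrite jT /=; have : b j != t by apply/negP => e; case/negP: hn; apply/existsP; exists j.
clear -hj; lia.
Qed.

Theorem theorem1 (m km : nat) (hm : (2 <= m)%N) (hkm : km_property m km)
  (k : nat) (hk : (km <= k)%N) (b : 'I_k -> int) (hb : injective b)
  (hadm : admissible (fun _ => 1) b)
  (g : nat) (hg : (0 < g)%N) (hcop : gcdz g%:Z (\prod_(j < k) b j) = 1%N) :
  exists S : {set 'I_k}, #|S| = m /\
    forall N : nat, exists2 n : nat, (N <= n)%N &
      (forall j, j \in S -> primez (g%:Z * n%:Z + b j)) /\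
      (forall i j, i \in S -> j \in S -> forall q : int, primez q ->
          g%:Z * n%:Z + b i <= q -> q <= g%:Z * n%:Z + b j ->
          exists2 l, l \in S & q = g%:Z * n%:Z + b l).
Proof.
have [P0 Pdvd] := F5 b g hg.
set P := Pb b g in P0 Pdvd *.
set s := sb b g.
set L := Lb b.
set A := (g * P)%N.
have A0 : (0 < A)%N by rewrite muln_gt0 hg P0.
have hK := hkm k hk (fun _ => A%:Z) (fun j => s + b j)
   (fun _ => (_ : 0 < A%:Z)) (det_new b A s hb A0) (adm_new b g hg hadm hcop).
have hApos : 0 < A%:Z by rewrite ltz_nat.
have {}hK := hK hApos.
pose Good (S : {set 'I_k}) (n : nat) := #|S| = m /\
      ((forall j, j \in S -> primez (g%:Z * n%:Z + b j)) /\
      (forall i j, i \in S -> j \in S -> forall q : int, primez q ->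
          g%:Z * n%:Z + b i <= q -> q <= g%:Z * n%:Z + b j ->
          exists2 l, l \in S & q = g%:Z * n%:Z + b l)).
suff key : forall N : nat, exists2 n : nat, (N <= n)%N & exists2 S, S \in enum {set 'I_k} & Good S n.
  have [S _ hS] := @pigeon _ (enum {set 'I_k}) Good key.
  exists S; split; first by have [n _ [h _]] := hS 0%N.
  by move=> N; have [n hn [_ h]] := hS N; exists n.
move=> N.
have [x hx hcnt] := hK (maxn N (P + L + 1)).
pose n := (n0b b + P * x)%N.
have gn : g%:Z * n%:Z = s + A%:Z * x%:Z.
  by rewrite /n /A /s /sb !PoszD !PoszM; ring.
pose T := [set j | primez (A%:Z * x%:Z + (s + b j))].
have hT : (m <= #|T|)%N.
  apply: leq_trans hcnt _; rewrite /nprimes_in; apply: leq_trans (count_undup _ _) _.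
  by rewrite count_map cnt.
pose h (i : nat) := #|[set j in T | (b j < i%:Z - L%:Z)%R]|.
have [i hi] : exists i, h i = m.
  apply: (@ivt_nat h m (2 * L).+1).
  - rewrite /h; suff -> : [set j in T | (b j < 0%:Z - L%:Z)%R] = set0 by rewrite cards0.
    apply/setP => j; rewrite !inE; apply/negbTE/negP => /andP [_ hj].
    have := bL b j; rewrite -/L; clear -hj; lia.
  - rewrite /h; apply: leq_trans hT _; apply: subset_leq_card; apply/subsetP => j jT.
    rewrite inE jT /=; have := bL b j; rewrite -/L; clear; lia.
  - move=> i0; rewrite /h.
    have -> : (i0.+1)%:Z - L%:Z = (i0%:Z - L%:Z) + 1 by rewrite -addn1 PoszD; ring.
    exact: step_card.
exists n.
  have := leq_pmull x P0; have := leq_maxl N (P + L + 1); rewrite /n; clear -hx; lia.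
exists [set j in T | (b j < i%:Z - L%:Z)%R]; first by rewrite mem_enum.
split; first exact: hi.
set GN := g%:Z * n%:Z in gn *.
split.
  move=> j; rewrite !inE => /andP [jT _]; move: jT.
  by rewrite gn; have -> : s + A%:Z * x%:Z + b j = A%:Z * x%:Z + (s + b j) by ring.
move=> i1 j1; rewrite !inE => /andP [i1T i1t] /andP [j1T j1t] q qp h1 h2.
case: (boolP [exists l, b l == q - GN]) => [/existsP [l /eqP el] | hgap].
  exists l; last by rewrite el; ring.
  rewrite !inE; apply/andP; split.
    have -> : A%:Z * x%:Z + (s + b l) = q by rewrite el; move: gn; clear; lia.
    exact: qp.
  clear -el h2 j1t; lia.
exfalso.
set c := q - GN in hgap.
have bi1 := bL b i1; have bj1 := bL b j1; rewrite -/L in bi1 bj1.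
have cL : (`|c| <= L)%N by rewrite /c; clear -h1 h2 bi1 bj1; lia.
have gc : gapb b c.
  apply/forallP => l; apply/negP => /eqP e; case/negP: hgap; apply/existsP; exists l; by rewrite e.
have [d1 _ d3] := F3 b g c hg cL.
have dP := Pdvd c gc cL.
have dq : (db b g c %| q)%Z.
  have -> : q = (s + c) + A%:Z * x%:Z by rewrite /c; move: gn; clear; lia.
  apply: rpredD => //; apply: dvdz_mulr; rewrite dvdzE /=; exact: dvdn_mull.
move: qp; rewrite /primez => /andP [q0 qpr].
move: dq; rewrite dvdzE => /(prime_nt_dvdP qpr) dq.
have d1' : `|db b g c| != 1%N by clear -d3; lia.
have eq1 := dq d1'.
have dle := dvdn_leq P0 dP.
have gnn : (n <= g * n)%N by rewrite leq_pmull.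
have : (n%:Z <= GN) by rewrite /GN -PoszM lez_nat.
have : (x <= n)%N by have := leq_pmull x P0; rewrite /n; clear; lia.
have := leq_maxr N (P + L + 1).
clear -eq1 dle hx h1 bi1 q0; lia.
Qed.
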